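(* Let $(Y,U)$ be discrete random variables with $Y$ taking values in a finite set $\mathcal{Y}$, let $\mu\in(0,\frac12)$ and $\epsilon>0$. If $$\Pr\left(|h(Y|U)-c|>\epsilon\right)<\mu$$ for some $c>0$, then $$|\mathbb{H}(Y|U)-c|<\epsilon+\mu\log_2\frac{|\mathcal{Y}|}{\mu^2}.$$
   Context: $h(Y|U)$ denotes the random variable $-\log_2 p_{Y|U}(Y|U)$; $\mathbb{H}(Y|U)$ is the conditional entropy. *)

(* Defs.v *)
From HB Require Import structures.
From mathcomp Require Import all_boot all_order all_algebra.
From mathcomp Require Import all_classical all_reals all_analysis.
Set Implicit Arguments. Unset Strict Implicit. Unset Printing Implicit Defensive.
Import Order.TTheory GRing.Theory Num.Theory.
Local Open Scope ring_scope.
Local Open Scope classical_set_scope.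

Definition log2 {R : realType} (x : R) : R := ln x / ln 2.

(* A pair of discrete random variables (Y,U), Y in a finite set Y, U in a
   countable set U, given by its joint probability mass function p y u. *)
Definition is_joint_pmf {R : realType} {Y : finType} {U : countType}
  (p : Y -> U -> R) : Prop :=
  (forall y u, 0 <= p y u) /\
  (\esum_(x in [set: Y * U]) (p x.1 x.2)%:E = 1)%E.

Definition marg {R : realType} {Y : finType} {U : countType}
  (p : Y -> U -> R) (u : U) : R := \sum_(y : Y) p y u.

(* h(Y|U) evaluated at outcome (y,u): -log2 p_{Y|U}(y|u) *)
Definition hcond {R : realType} {Y : finType} {U : countType}
  (p : Y -> U -> R) (y : Y) (u : U) : R := - log2 (p y u / marg p u).

Definition supp {R : realType} {Y : finType} {U : countType}
  (p : Y -> U -> R) : set (Y * U) := [set x | 0 < p x.1 x.2].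

Definition prob {R : realType} {Y : finType} {U : countType}
  (p : Y -> U -> R) (E : set (Y * U)) : \bar R :=
  \esum_(x in E) (p x.1 x.2)%:E.

Definition condH {R : realType} {Y : finType} {U : countType}
  (p : Y -> U -> R) : \bar R :=
  \esum_(x in supp p) (p x.1 x.2 * hcond p x.1 x.2)%:E.

(* Main.v *)
Require Import Defs.
From HB Require Import structures.
From mathcomp Require Import all_boot all_order all_algebra.
From mathcomp Require Import all_classical all_reals all_analysis.
From mathcomp Require Import ring lra.
Import Order.TTheory GRing.Theory Num.Theory.
Local Open Scope ring_scope.
Local Open Scope classical_set_scope.
Lemma final (R : realType) (L2 LY LM mu eps c qB qC hB hC : R) :
 0 < L2 -> 1/2 <= L2 -> 0 <= LY -> LM < -L2 -> 0 < mu -> 0 < eps -> 0 < c -> 0 <= qB -> qB < mu -> mu < 1/2 -> qB + qC = 1 -> 0 <= hB -> 0 <= hC ->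
 L2*hB + qB <= (LY - LM)*qB + mu ->
 L2*hC + qC <= (L2+LY)*qC + 1/2 ->
 hC <= (c+eps)*qC ->
 (eps <= c -> (c-eps)*qC <= hC) ->
 `|hB + hC - c| < eps + mu * ((LY - 2*LM)/L2).
Proof.
move=> L20 L21 LY0 LM0 mu0 eps0 c0 qB0 qBmu mu12 qBC hB0 hC0 EB EC E4 E5.
have K : mu * ((LY - 2*LM)/L2) = (mu * (LY - 2 * LM)) / L2 by rewrite mulrA.
rewrite K ltr_norml; apply/andP; split.
  have [ce|ce] := lerP eps c.
    have h5 := E5 ce.
    have h6 : L2 * (c - eps) <= L2 + LY.
      have qC0 : 1/2 <= qC by lra.
      have : L2 * (c - eps) * qC <= (L2 + LY) * qC.
        have : L2 * ((c - eps) * qC) <= L2 * hC by rewrite ler_pM2l.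
        nra.
      by rewrite ler_pM2r //; lra.
    have h7 : L2 * (qB * (c - eps)) <= qB * (L2 + LY).
      have := ler_wpM2l qB0 h6. nra.
    have h8 : qB * (L2 + LY) < mu * (LY - 2 * LM).
      have : qB * (L2 + LY) < mu * (L2 + LY) by rewrite ltr_pM2r //; lra.
      nra.
    have h9 : (qB * (c - eps)) < (mu * (LY - 2 * LM)) / L2.
      by rewrite ltr_pdivlMr //; lra.
    nra.
  have : 0 < (mu * (LY - 2 * LM)) / L2.
    by apply: divr_gt0 => //; apply: mulr_gt0 => //; lra.
  lra.
have h1 : L2 * hB < mu * (LY - 2 * LM).
  have m1 : - LM > 1/2 by lra.
  have [mge|mlt] := lerP 1 (- LM).
    nra.
  nra.
have h2 : hB < (mu * (LY - 2 * LM)) / L2 by rewrite ltr_pdivlMr //; lra.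
nra.
Qed.

Lemma ln_le_sub1 {R : realType} (z : R) : 0 < z -> ln z <= z - 1.
Proof.
move=> z0; have := @le_ln1Dx R (z - 1); rewrite (_ : 1 + (z - 1) = z); last by lra.
by apply; lra.
Qed.

Lemma tangent (R : realType) (p w a : R) : 0 < p -> p <= w -> 0 < a ->
  ln 2 * (p * (- (ln (p / w) / ln 2))) + p <= p * ln a + a^-1 * w.
Proof.
move=> p0 pw a0.
have w0 : 0 < w by lra.
have l2 : 0 < ln (2:R) by rewrite ln_gt0 //; lra.
have e1 : ln 2 * (p * (- (ln (p / w) / ln 2))) = p * (ln w - ln p).
  rewrite ln_div ?posrE //; field; lra.
have z0 : 0 < w / (p * a) by apply: divr_gt0 => //; apply: mulr_gt0.
have := ln_le_sub1 _ z0.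
rewrite ln_div ?posrE ?mulr_gt0 // lnM ?posrE // => h.
have : p * (ln w - (ln p + ln a)) <= p * (w / (p * a) - 1) by rewrite ler_pM2l.
have -> : p * (w / (p * a) - 1) = a^-1 * w - p by field; lra.
rewrite e1; lra.
Qed.

Section EsumLemmas.
Local Open Scope ereal_scope.
Lemma esumZ_le (R : realType) (T : choiceType) (I : set T) (a : T -> \bar R) (k : R) :
  (0 <= k)%R -> (forall i, I i -> 0 <= a i) ->
  \esum_(i in I) (k%:E * a i) <= k%:E * \esum_(i in I) a i.
Proof.
move=> k0 a0; apply: ge_ereal_sup => _ [X [finX XI] <-].
rewrite fsbig_finite //= big_seq -ge0_sume_distrr; last first.
  by move=> i /[!in_fset_set]// /[!inE] /XI /a0.
rewrite -big_seq; apply: lee_wpmul2l; first by rewrite lee_fin.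
apply: ereal_sup_ubound; exists X => //.
by rewrite fsbig_finite.
Qed.

Lemma sum_fin (R : realType) (Y : finType) (F : Y -> \bar R) :
  \sum_(y \in [set: Y]) F y = \sum_(y : Y) F y.
Proof.
have -> : [set: Y] = [set` (predT : pred Y)] by apply/seteqP; split.
rewrite -(@bigfs _ _ _ _ _ predT _ (index_enum_uniq Y)) //=.
by move=> i _; rewrite mem_index_enum.
Qed.

Lemma esumZ (R : realType) (T : choiceType) (I : set T) (a : T -> \bar R) (k : R) :
  (0 <= k)%R -> (forall i, I i -> 0 <= a i) ->
  \esum_(i in I) (k%:E * a i) = k%:E * \esum_(i in I) a i.
Proof.
move=> k0 a0; have [->|kn0] := eqVneq k 0%R.
  by rewrite mul0e esum1 // => i _; rewrite mul0e.
have kp : (0 < k)%R by rewrite lt_neqAle eq_sym kn0.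
apply/eqP; rewrite eq_le esumZ_le //=.
have e : \esum_(i in I) a i = \esum_(i in I) (k^-1%:E * (k%:E * a i)).
  by apply: eq_esum => i _; rewrite muleA -EFinM mulVf // mul1e.
rewrite e; apply: (@le_trans _ _ (k%:E * (k^-1%:E * \esum_(i in I) (k%:E * a i)))).
  apply: lee_wpmul2l; first by rewrite lee_fin ltW.
  apply: esumZ_le; first by rewrite invr_ge0 ltW.
  by move=> i Ii; apply: mule_ge0; [rewrite lee_fin ltW|exact: a0].
by rewrite muleA -EFinM divff // mul1e.
Qed.

Lemma esum_subset (R : realType) (T : choiceType) (I J : set T) (a : T -> \bar R) :
  I `<=` J -> (forall i, J i -> 0 <= a i) ->
  \esum_(i in I) a i <= \esum_(i in J) a i.
Proof.
move=> IJ a0; rewrite (esumID I J) // (setIidr IJ) leeDl //.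
by apply: esum_ge0 => i [] /a0.
Qed.

Lemma esum_prod (R : realType) (Y : finType) (U : choiceType) (f : Y * U -> \bar R) :
  (forall x, 0 <= f x) ->
  \esum_(x in [set: Y * U]) f x = \sum_(y : Y) \esum_(u in [set: U]) f (y, u).
Proof.
move=> f0.
have -> : [set: Y * U] = [set: Y] `*`` (fun _ => [set: U]) by apply/seteqP; split => -[].
transitivity (\esum_(k in [set: Y] `*`` (fun _ => [set: U])) f (k.1, k.2)).
  by apply: eq_esum => -[].
rewrite -(esum_esum (a := fun y u => f (y, u))) //.
rewrite esum_fset //; first exact: sum_fin.
- exact: finite_finset.
- by move=> y _; apply: esum_ge0.
Qed.

Lemma esum_marg (R : realType) (Y : finType) (U : countType) (p : Y -> U -> R) :
  is_joint_pmf p -> \esum_(x in [set: Y * U]) (marg p x.2)%:E = (#|Y|%:R)%:E.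
Proof.
move=> [p0 p1].
have m0 u : (0 <= marg p u)%R by rewrite /marg sumr_ge0.
rewrite esum_prod //=; last by move=> x; rewrite lee_fin.
have M : \esum_(u in [set: U]) (marg p u)%:E = 1.
  transitivity (\sum_(y : Y) \esum_(u in [set: U]) (p y u)%:E).
    rewrite -esum_sum; last by move=> *; rewrite lee_fin.
    by apply: eq_esum => u _; rewrite /marg sumEFin.
  by rewrite -p1 (@esum_prod _ _ _ (fun x => (p x.1 x.2)%:E)) // => x; rewrite lee_fin.
under eq_bigr do rewrite M.
by rewrite sumEFin sumr_const.
Qed.

Lemma fin_from (R : realType) (x y : \bar R) (k m z : R) : (0 < k)%R -> 0 <= x -> 0 <= y ->
  y <= 1 -> k%:E * x + y <= m%:E * y + z%:E -> x = (fine x)%:E /\ y = (fine y)%:E.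
Proof.
move=> k0 x0 y0; case: y y0 => [s| |] //= _ y1; case: x x0 => [r| |] //= _.
by rewrite gt0_muley ?lte_fin.
Qed.

Lemma tangent_sum (R : realType) (Y : finType) (U : countType) (p : Y -> U -> R)
  (A : set (Y * U)) (a : R) :
  is_joint_pmf p -> A `<=` supp p -> (1 <= a)%R ->
  ((ln 2)%:E * (\esum_(x in A) (p x.1 x.2 * hcond p x.1 x.2)%:E)
    + (\esum_(x in A) (p x.1 x.2)%:E)
  <= (ln a)%:E * (\esum_(x in A) (p x.1 x.2)%:E) + (a^-1 * #|Y|%:R)%:E)%E.
Proof.
move=> pmf AS a1; have [p0 _] := pmf.
have a0 : (0 < a)%R by apply: lt_le_trans a1.
have l2 : (0 <= ln (2:R))%R by rewrite ln_ge0 //; lra.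
have la : (0 <= ln a)%R by rewrite ln_ge0.
have pw x : (p x.1 x.2 <= marg p x.2)%R.
  rewrite /marg (bigD1 x.1) //= lerDl sumr_ge0 // => *; exact: p0.
have h0 x : A x -> (0 <= p x.1 x.2 * hcond p x.1 x.2)%R.
  move=> /AS Sx; apply: mulr_ge0; first exact: p0.
  have w0 : (0 < marg p x.2)%R by apply: lt_le_trans (pw x).
  rewrite /hcond /log2 -mulNr; apply: divr_ge0 => //.
  by rewrite oppr_ge0 ln_le0 // ler_pdivrMr // mul1r.
have mg x : (0 <= marg p x)%R by rewrite /marg sumr_ge0.
have ai : (0 <= a^-1)%R by rewrite invr_ge0 ltW.
have s1 : forall i, A i -> 0 <= (ln a)%:E * (p i.1 i.2)%:E.
  by move=> *; rewrite -EFinM lee_fin mulr_ge0.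
have s2 : forall i, A i -> 0 <= (a^-1)%:E * (marg p i.2)%:E.
  by move=> *; rewrite -EFinM lee_fin mulr_ge0.
have s3 : forall i, A i -> 0 <= (ln 2)%:E * (p i.1 i.2 * hcond p i.1 i.2)%:E.
  by move=> i /h0 ?; rewrite -EFinM lee_fin mulr_ge0.
have s4 : forall i, A i -> 0 <= (p i.1 i.2)%:E by move=> *; rewrite lee_fin.
have s5 : forall i, A i -> 0 <= (marg p i.2)%:E by move=> *; rewrite lee_fin.
have s6 : forall i, A i -> 0 <= (p i.1 i.2 * hcond p i.1 i.2)%:E by move=> i /h0.
rewrite -esumZ // -esumD //.
apply: (@le_trans _ _ (\esum_(x in A) ((ln a)%:E * (p x.1 x.2)%:E + (a^-1)%:E * (marg p x.2)%:E))).
  apply: le_esum => x /AS Sx.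
  rewrite -!EFinM -!EFinD lee_fin (mulrC (ln a)).
  by apply: tangent => //; exact: pw.
rewrite esumD // esumZ // esumZ //.
rewrite leeD2l // EFinM; apply: lee_wpmul2l; first by rewrite lee_fin invr_ge0 ltW.
rewrite -(@esum_marg _ _ _ p pmf); apply: esum_subset => //.
by move=> *; rewrite lee_fin /marg sumr_ge0.
Qed.
End EsumLemmas.

Theorem lemma8 (R : realType) (Y : finType) (U : countType)
  (p : Y -> U -> R) (mu eps c : R) :
  is_joint_pmf p ->
  0 < mu -> mu < 1 / 2 -> 0 < eps -> 0 < c ->
  (prob p [set x | supp p x /\ (eps < `|hcond p x.1 x.2 - c|)%R] < mu%:E)%E ->
  (`|condH p - c%:E| < (eps + mu * log2 (#|Y|%:R / mu ^+ 2))%:E)%E.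
Proof.
move=> pmf mu0 mu12 eps0 c0 hBad.
have [p0 p1] := pmf.
pose S := supp p.
pose bad := [set x : Y * U | (eps < `|hcond p x.1 x.2 - c|)%R].
have pw x : (p x.1 x.2 <= marg p x.2)%R.
  rewrite /marg (bigD1 x.1) //= lerDl sumr_ge0 // => *; exact: p0.
have l2 : (0 < ln (2:R))%R by rewrite ln_gt0 //; lra.
have h0 x : S x -> (0 <= p x.1 x.2 * hcond p x.1 x.2)%R.
  move=> Sx; apply: mulr_ge0; first exact: p0.
  have w0 : (0 < marg p x.2)%R by apply: lt_le_trans (pw x).
  rewrite /hcond /log2 -mulNr; apply: divr_ge0; last exact: ltW.
  by rewrite oppr_ge0 ln_le0 // ler_pdivrMr // mul1r.
have P0 : forall x : Y * U, (0 <= (p x.1 x.2)%:E)%E by move=> x; rewrite lee_fin.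
have PH0 : forall x, S x -> (0 <= (p x.1 x.2 * hcond p x.1 x.2)%:E)%E.
  by move=> x /h0; rewrite lee_fin.
have ES : (\esum_(x in S) (p x.1 x.2)%:E = 1)%E.
  rewrite -p1 (esumID S [set: Y * U]) // setTI.
  rewrite [X in _ = (_ + X)%E]esum1 ?adde0 // => x [_ nS].
  move/negP: nS; rewrite -leNgt => h; apply/eqP; rewrite eq_le lee_fin h lee_fin p0.
  done.
have E2 := esumID bad S (fun x => (p x.1 x.2)%:E) (fun x _ => P0 x).
have E3 : condH p = (\esum_(x in S `&` bad) (p x.1 x.2 * hcond p x.1 x.2)%:E
   + \esum_(x in S `&` ~` bad) (p x.1 x.2 * hcond p x.1 x.2)%:E)%E.
  by rewrite /condH (esumID bad).
have BS : S `&` bad `<=` supp p by move=> x [].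
have CS : S `&` ~` bad `<=` supp p by move=> x [].
have W0 : forall x : Y * U, (0 <= (marg p x.2)%:E)%E.
  by move=> x; rewrite lee_fin /marg sumr_ge0.
have Y1 : (1 <= (#|Y|%:R : R))%R.
  rewrite -lee_fin -ES -(@esum_marg _ _ _ p pmf).
  apply: (@le_trans _ _ (\esum_(x in S) (marg p x.2)%:E)%E).
    by apply: le_esum => x _; rewrite lee_fin.
  by apply: esum_subset.
set Yn := (#|Y|%:R : R) in Y1 *.
have a1 : (1 <= Yn / mu)%R.
  by rewrite ler_pdivlMr // mul1r; lra.
have a2 : (1 <= 2 * Yn)%R by lra.
have EBt := @tangent_sum _ _ _ p _ _ pmf BS a1.
have ECt := @tangent_sum _ _ _ p _ _ pmf CS a2.
have [hB [qB [EhB EqB]]] : exists hB qB : R,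
  \esum_(x in S `&` bad) (p x.1 x.2 * hcond p x.1 x.2)%:E = hB%:E /\
  \esum_(x in S `&` bad) (p x.1 x.2)%:E = qB%:E.
  have [] := @fin_from _ _ _ _ _ _ l2 _ _ _ EBt.
  - by apply: esum_ge0 => x [] /PH0.
  - by apply: esum_ge0.
  - by rewrite -ES; apply: esum_subset => // x [].
  by move=> e1 e2; do 2 eexists; split; eassumption.
have [hC [qC [EhC EqC]]] : exists hC qC : R,
  \esum_(x in S `&` ~` bad) (p x.1 x.2 * hcond p x.1 x.2)%:E = hC%:E /\
  \esum_(x in S `&` ~` bad) (p x.1 x.2)%:E = qC%:E.
  have [] := @fin_from _ _ _ _ _ _ l2 _ _ _ ECt.
  - by apply: esum_ge0 => x [] /PH0.
  - by apply: esum_ge0.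
  - by rewrite -ES; apply: esum_subset => // x [].
  by move=> e1 e2; do 2 eexists; split; eassumption.
have hB0 : (0 <= hB)%R.
  by rewrite -lee_fin -EhB; apply: esum_ge0 => x [] /PH0.
have hC0 : (0 <= hC)%R.
  by rewrite -lee_fin -EhC; apply: esum_ge0 => x [] /PH0.
have qB0 : (0 <= qB)%R by rewrite -lee_fin -EqB; apply: esum_ge0.
have qBmu : (qB < mu)%R.
  by rewrite -lte_fin -EqB; exact: hBad.
have qBC : (qB + qC = 1)%R.
  by apply: EFin_inj; rewrite EFinD -EqB -EqC -E2.
have E4 : (hC <= (c + eps) * qC)%R.
  rewrite -lee_fin -EhC EFinM -EqC -esumZ; last by move=> *.
    2: by rewrite ltW // addr_gt0.
  apply: le_esum => x [Sx nb]; rewrite -EFinM lee_fin [X in _ <= X]mulrC.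
  apply: ler_wpM2l; first exact: p0.
  move/negP: nb; rewrite -leNgt ler_norml => /andP[_]; lra.
have E5 : (eps <= c -> (c - eps) * qC <= hC)%R.
  move=> ce.
  rewrite -lee_fin -EhC EFinM -EqC -esumZ; last by move=> *.
    2: by rewrite subr_ge0.
  apply: le_esum => x [Sx nb]; rewrite -EFinM lee_fin [X in X <= _]mulrC.
  apply: ler_wpM2l; first exact: p0.
  move/negP: nb; rewrite -leNgt ler_norml => /andP[+ _]; lra.
rewrite EhB EqB in EBt.
rewrite EhC EqC in ECt.
move: EBt ECt; rewrite -!EFinM -!EFinD !lee_fin => EB EC.
have Yp : (0 < Yn)%R by lra.
have lnYmu : ln (Yn / mu) = (ln Yn - ln mu)%R by rewrite ln_div ?posrE.
have lnY2 : ln (2 * Yn) = (ln 2 + ln Yn)%R by rewrite lnM ?posrE //; lra.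
have eB : ((Yn / mu)^-1 * #|Y|%:R = mu)%R.
  by field; rewrite !lt0r_neq0.
have eC : ((2 * Yn)^-1 * #|Y|%:R = 1/2)%R.
  by field; rewrite !lt0r_neq0.
rewrite lnYmu eB in EB.
rewrite lnY2 eC in EC.
have L21 : (1/2 <= ln (2:R))%R.
  have := @ln_le_sub1 R (1/2) ltac:(lra).
  rewrite ln_div ?posrE // ln1; lra.
have LM : (ln mu < - ln (2:R))%R.
  have : (ln mu < ln (1/2 : R))%R by rewrite ltr_ln ?posrE //; lra.
  by rewrite ln_div ?posrE // ln1; lra.
have LY0 : (0 <= ln Yn)%R by rewrite ln_ge0.
rewrite E3 EhB EhC -EFinD.
rewrite abse_EFin lte_fin.
have -> : log2 (Yn / mu ^+ 2) = ((ln Yn - 2 * ln mu) / ln 2)%R.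
  rewrite /log2 ln_div ?posrE ?exprn_gt0 // lnXn // mulr2n; congr (_ / _); ring.
exact: (@final R (ln 2) (ln Yn) (ln mu) mu eps c qB qC hB hC l2 L21 LY0 LM mu0 eps0 c0 qB0 qBmu mu12 qBC hB0 hC0 EB EC E4 E5).
Qed.
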